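(* For every positive integer $r$, $\displaystyle \bar T(\{1\}_r)=\frac{(-1)^r}{r!}\left(\frac{\pi}{2}\right)^r.$
   Context: $\{1\}_r$ denotes the sequence of $r$ ones. $\bar T(\{1\}_r):=2^r\sum_{0<n_1<\cdots<n_r}\frac{(-1)^{n_r}}{(2n_1-1)(2n_2-2)\cdots(2n_r-r)}$ (conditionally convergent). *)

(* Defs.v *)
From Stdlib Require Import Reals List.
From Coquelicot Require Import Coquelicot.
Open Scope R_scope.

(* tdep k m = sum over 0 < n_1 < ... < n_k = m of
     1/((2 n_1 - 1)(2 n_2 - 2) ... (2 n_k - k)),
   with the convention tdep 0 m = [m = 0] (empty chain ending at n_0 = 0). *)
Fixpoint tdep (k m : nat) : R :=
  match k with
  | O => if Nat.eqb m 0 then 1 else 0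
  | S k' => / (2 * INR m - INR (S k')) *
            fold_right Rplus 0 (map (tdep k') (List.seq 0 m))
  end.

Definition Tbar_partial (r N : nat) : R :=
  sum_f_R0 (fun m => (-1) ^ m * tdep r m) N.

(* \bar T({1}_r) := 2^r * lim_{N -> oo} Tbar_partial r N  (conditionally
   convergent, summed by the largest index). *)

(* Main.v *)
Require Import Defs.
From Stdlib Require Import Reals List.
From Coquelicot Require Import Coquelicot.
From Stdlib Require Import Lra Lia Psatz Arith.
Open Scope R_scope.

Fixpoint Csum (k N : nat) : R :=
  match N with O => 0 | S N' => Csum k N' + tdep k N' end.

Lemma fold_plus_acc (l : list R) (a : R) :
  fold_right Rplus a l = fold_right Rplus 0 l + a.
Proof. induction l as [|x l IH]; simpl; [lra| rewrite IH; lra]. Qed.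

Lemma fold_Csum k N : fold_right Rplus 0 (map (tdep k) (seq 0 N)) = Csum k N.
Proof.
  induction N as [|N IH]; [reflexivity|].
  rewrite seq_S, map_app, fold_right_app. simpl.
  rewrite fold_plus_acc, IH. lra.
Qed.

Lemma tdep_S k m : tdep (S k) m = / (2 * INR m - INR (S k)) * Csum k m.
Proof. rewrite <- fold_Csum. reflexivity. Qed.

Lemma Csum_zero k m : (forall n, (n < m)%nat -> tdep k n = 0) -> Csum k m = 0.
Proof.
  induction m as [|m IH]; intros H; simpl; [reflexivity|].
  rewrite IH by (intros; apply H; lia). rewrite H by lia. ring.
Qed.

Lemma tdep_zero k m : (m < k)%nat -> tdep k m = 0.
Proof.
  revert m; induction k as [|k IH]; intros m Hm; [lia|].
  rewrite tdep_S, Csum_zero; [ring|]. intros n Hn; apply IH; lia.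
Qed.

Lemma Csum_small k m : (m <= k)%nat -> Csum k m = 0.
Proof. intros; apply Csum_zero; intros; apply tdep_zero; lia. Qed.

Lemma Csum_nonneg k m : (forall n, 0 <= tdep k n) -> 0 <= Csum k m.
Proof. intros H; induction m; simpl; [lra| specialize (H m); lra]. Qed.

Lemma denom_pos k m : (k < m)%nat -> INR m <= 2 * INR m - INR (S k).
Proof. intros H. assert (H1 := le_INR (S k) m ltac:(lia)). lra. Qed.

Lemma tdep_nonneg k m : 0 <= tdep k m.
Proof.
  revert m; induction k as [|k IH]; intros m.
  - simpl. destruct (Nat.eqb m 0); lra.
  - destruct (le_lt_dec m k) as [Hm|Hm].
    + rewrite tdep_zero by lia. lra.
    + rewrite tdep_S. apply Rmult_le_pos.
      * apply Rlt_le, Rinv_0_lt_compat. pose proof (denom_pos k m Hm).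
        assert (0 < INR m) by (apply lt_0_INR; lia). lra.
      * apply Csum_nonneg; auto.
Qed.

Lemma coef k m : tdep (S k) m * INR (2 * m - S k) = Csum k m.
Proof.
  destruct (le_lt_dec m k) as [Hm|Hm].
  - rewrite tdep_zero by lia. rewrite Csum_small by lia. ring.
  - rewrite tdep_S, minus_INR by lia. rewrite mult_INR.
    assert (H2 : INR 2 = 2) by (simpl; lra). rewrite H2.
    pose proof (denom_pos k m Hm).
    assert (0 < INR m) by (apply lt_0_INR; lia).
    field. lra.
Qed.

Fixpoint Psum (k N : nat) (y : R) : R :=
  match N with O => 0 | S N' => Psum k N' y + (-1) ^ N' * tdep k N' * y ^ (2 * N' - k) end.
Fixpoint Ader (k N : nat) (y : R) : R :=
  match N with O => 0 | S N' => Ader k N' y + (-1) ^ N' * Csum k N' * y ^ (Nat.pred (2 * N' - S k)) end.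
Definition Q (k : nat) (y : R) : R := (-1) ^ k * atan y ^ k / INR (fact k).

Lemma dscal c n x : derivable_pt_lim (fun u => c * u ^ n) x (c * (INR n * x ^ pred n)).
Proof. apply (derivable_pt_lim_scal (fun u => u^n)); apply derivable_pt_lim_pow. Qed.

Lemma dpl_eq f x l l' : l = l' -> derivable_pt_lim f x l -> derivable_pt_lim f x l'.
Proof. intros ->; auto. Qed.

Lemma D1 k N y : derivable_pt_lim (fun y => Psum (S k) N y) y (Ader k N y).
Proof.
  induction N as [|N IH]; cbn [Psum Ader].
  - apply derivable_pt_lim_const.
  - apply (dpl_eq _ _ (Ader k N y + (-1) ^ N * tdep (S k) N * (INR (2*N - S k) * y ^ Nat.pred (2 * N - S k)))).
    { rewrite <- coef. ring. }
    apply (derivable_pt_lim_plus (fun y => Psum (S k) N y) (fun y => (-1)^N * tdep (S k) N * y ^ (2*N - S k))).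
    exact IH. apply dscal.
Qed.

Lemma D2 k N y : (1 + y^2) * Ader k (S N) y = - Psum k N y + (-1)^N * Csum k N * y ^ (2*N - k).
Proof.
  induction N as [|N IH].
  - cbn [Ader Psum Csum]. ring.
  - change (Ader k (S (S N)) y) with (Ader k (S N) y + (-1)^(S N) * Csum k (S N) * y ^ (Nat.pred (2 * S N - S k))).
    change (Psum k (S N) y) with (Psum k N y + (-1)^N * tdep k N * y^(2*N - k)).
    change (Csum k (S N)) with (Csum k N + tdep k N).
    change ((-1)^(S N)) with (-1 * (-1)^N).
    destruct (le_lt_dec k N) as [H|H].
    + replace (Nat.pred (2 * S N - S k)) with (2*N - k)%nat by lia.
      replace (2 * S N - k)%nat with ((2*N - k) + 2)%nat by lia.
      rewrite pow_add. rewrite Rmult_plus_distr_l, IH. ring.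
    + rewrite tdep_zero by lia. rewrite Csum_small in * by lia.
      rewrite Rmult_plus_distr_l, IH. ring.
Qed.

Lemma Psum_at0 k N : Psum (S k) N 0 = 0.
Proof.
  induction N as [|N IH]; [reflexivity|].
  cbn [Psum]. rewrite IH.
  destruct (le_lt_dec N k) as [H|H].
  - rewrite tdep_zero by lia. ring.
  - rewrite pow_i by lia. ring.
Qed.

Lemma Psum0 N y : Psum 0 (S N) y = 1.
Proof.
  induction N as [|N IH].
  - simpl. ring.
  - change (Psum 0 (S (S N)) y) with (Psum 0 (S N) y + (-1)^(S N) * tdep 0 (S N) * y^(2 * S N - 0)).
    rewrite IH. replace (tdep 0 (S N)) with 0 by reflexivity. ring.
Qed.

Lemma Q0 y : Q 0 y = 1.
Proof. unfold Q. simpl. field. Qed.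

Lemma Q_at0 k : Q (S k) 0 = 0.
Proof. unfold Q. rewrite atan_0, pow_i by lia. unfold Rdiv. ring. Qed.

Lemma dQ k y : derivable_pt_lim (Q (S k)) y (- Q k y / (1 + y^2)).
Proof.
  set (c := (-1)^(S k) / INR (fact (S k))).
  apply (dpl_eq _ _ ((c * (INR (S k) * atan y ^ Nat.pred (S k))) * / (1 + y^2))).
  { unfold c, Q. change (fact (S k)) with (S k * fact k)%nat. rewrite mult_INR.
    change ((-1)^(S k)) with (-1 * (-1)^k). simpl Nat.pred.
    pose proof (INR_fact_neq_0 k). assert (0 < INR (S k)) by (apply lt_0_INR; lia).
    assert (0 < 1 + y^2) by (pose proof (pow2_ge_0 y); lra).
    field. repeat split; lra. }
  apply is_derive_Reals.
  apply (is_derive_ext (fun y => c * atan y ^ (S k)) (Q (S k))).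
  { intros t. cbv beta. unfold Q, c. unfold Rdiv. rewrite !Rmult_assoc. f_equal. apply Rmult_comm. }
  apply is_derive_Reals.
  exact (derivable_pt_lim_comp atan (fun u => c * u^(S k)) y _ _ (derivable_pt_lim_atan y) (dscal c (S k) (atan y))).
Qed.

Lemma abs_bound (g f g' f' : R -> R) :
  (forall y, derivable_pt_lim g y (g' y)) ->
  (forall y, derivable_pt_lim f y (f' y)) ->
  (forall y, 0 <= y <= 1 -> Rabs (g' y) <= f' y) ->
  g 0 = 0 -> f 0 = 0 ->
  forall y, 0 <= y <= 1 -> Rabs (g y) <= f y.
Proof.
  intros Hg Hf Hb g0 f0 y Hy.
  destruct (Req_dec y 0) as [->|Hy0]. { rewrite g0, f0, Rabs_R0; lra. }
  assert (Hlt : 0 < y) by lra.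
  destruct (MVT_cor2 (fun x => f x - g x) (fun x => f' x - g' x) 0 y Hlt) as [c [Hc1 Hc2]].
  { intros c _. apply derivable_pt_lim_minus; auto. }
  destruct (MVT_cor2 (fun x => f x + g x) (fun x => f' x + g' x) 0 y Hlt) as [d [Hd1 Hd2]].
  { intros d _. apply derivable_pt_lim_plus; auto. }
  cbv beta in Hc1, Hd1. rewrite g0, f0 in Hc1, Hd1.
  assert (Bc := Hb c ltac:(lra)). assert (Bd := Hb d ltac:(lra)).
  unfold Rabs in Bc, Bd. destruct (Rcase_abs (g' c)); destruct (Rcase_abs (g' d));
  apply Rabs_le; split; nra.
Qed.

Lemma div_helper t C D s a : 0 <= t -> t * D = C -> s * s <= D -> C <= a * s -> 0 < s -> t <= a / s.
Proof.
  intros. assert (t * s <= a) by nra.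
  apply (Rmult_le_reg_r s); [lra|]. unfold Rdiv. rewrite Rmult_assoc, Rinv_l by lra. lra.
Qed.

Lemma Csum0 N : Csum 0 (S N) = 1.
Proof.
  induction N as [|N IH]; [simpl; lra|].
  change (Csum 0 (S (S N))) with (Csum 0 (S N) + tdep 0 (S N)). rewrite IH.
  replace (tdep 0 (S N)) with 0 by reflexivity. ring.
Qed.

Lemma sqrt_ge1 n : 1 <= sqrt (INR (S n)).
Proof.
  rewrite <- sqrt_1. apply sqrt_le_1_alt.
  pose proof (le_INR 1 (S n) ltac:(lia)) as H. change (INR 1) with 1 in H. lra.
Qed.

Lemma Csum_bound k N : Csum k N <= 2^k * sqrt (INR N).
Proof.
  revert N; induction k as [|k IH].
  - intros N; destruct N as [|N].
    + simpl. rewrite sqrt_0. lra.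
    + rewrite Csum0. pose proof (sqrt_ge1 N). rewrite pow_O. lra.
  - assert (H : forall N, Csum (S k) (S N) <= 2^(S k) * sqrt (INR N)).
    { induction N as [|N IHN].
      - change (Csum (S k) 1) with (Csum (S k) 0 + tdep (S k) 0).
        rewrite tdep_zero by lia. change (Csum (S k) 0) with 0. change (INR 0) with 0.
        rewrite sqrt_0. lra.
      - change (Csum (S k) (S (S N))) with (Csum (S k) (S N) + tdep (S k) (S N)).
        assert (Hs : sqrt (INR (S N)) * sqrt (INR (S N)) = INR (S N)) by (apply sqrt_sqrt; apply pos_INR).
        assert (Ha : sqrt (INR N) * sqrt (INR N) = INR N) by (apply sqrt_sqrt; apply pos_INR).
        assert (Hs0 : 0 < sqrt (INR (S N))) by (apply sqrt_lt_R0; apply lt_0_INR; lia).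
        assert (Ha0 : 0 <= sqrt (INR N)) by apply sqrt_pos.
        assert (Ht : tdep (S k) (S N) <= 2^k / sqrt (INR (S N))).
        { destruct (le_lt_dec (S N) k) as [Hk|Hk].
          - rewrite tdep_zero by lia. apply Rlt_le. unfold Rdiv.
            apply Rmult_lt_0_compat; [apply pow_lt; lra | apply Rinv_0_lt_compat; lra].
          - apply (div_helper _ (Csum k (S N)) (INR (2 * S N - S k))).
            + apply tdep_nonneg.
            + apply coef.
            + rewrite Hs. apply le_INR; lia.
            + apply IH.
            + exact Hs0. }
        set (s := sqrt (INR (S N))) in *. set (a := sqrt (INR N)) in *.
        rewrite S_INR in Hs.
        set (w := 2^k / s) in *.
        assert (Hw : w * s = 2^k) by (unfold w; field; lra).
        assert (Hp : 0 < 2^k) by (apply pow_lt; lra).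
        assert (Hw0 : 0 < w) by nra.
        change (2 ^ S k) with (2 * 2^k) in *.
        assert (Hst : 2 * 2^k * a + w <= 2 * 2^k * s).
        { assert (E : 2*a*s + 1 <= 2*s*s) by nra.
          assert (E2 : 2^k*(2*a*s+1) <= 2^k*(2*s*s)) by (apply Rmult_le_compat_l; lra).
          apply (Rmult_le_reg_r s); [lra|].
          replace ((2 * 2 ^ k * a + w) * s) with (2^k*(2*a*s+1)) by (rewrite <- Hw; ring).
          lra. }
        lra. }
    intros N; destruct N as [|N].
    + change (Csum (S k) 0) with 0. change (INR 0) with 0. rewrite sqrt_0. lra.
    + eapply Rle_trans; [apply H|]. apply Rmult_le_compat_l; [apply pow_le; lra|].
      apply sqrt_le_1_alt, le_INR; lia.
Qed.

Lemma lim_sqrt : is_lim_seq (fun n => sqrt (INR n)) p_infty.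
Proof.
  unfold is_lim_seq.
  eapply filterlim_comp. apply is_lim_seq_INR.
  apply (is_lim_sqrt_p (fun x => x) p_infty). apply is_lim_id.
Qed.

Lemma lim_err k : is_lim_seq (fun n => Csum k n / INR (S (2 * n - k))) 0.
Proof.
  apply is_lim_seq_le_le with (u := fun _ => 0) (w := fun n => 2^k * / sqrt (INR (S n))).
  - intros n.
    assert (HD : 0 < INR (S (2 * n - k))) by (apply lt_0_INR; lia).
    assert (Hs0 : 0 < sqrt (INR (S n))) by (apply sqrt_lt_R0; apply lt_0_INR; lia).
    assert (Hp : 0 < 2^k) by (apply pow_lt; lra).
    split.
    + unfold Rdiv. apply Rmult_le_pos; [apply Csum_nonneg, tdep_nonneg|].
      apply Rlt_le, Rinv_0_lt_compat; lra.
    + destruct (le_lt_dec n k) as [Hk|Hk].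
      * rewrite Csum_small by lia. unfold Rdiv. rewrite Rmult_0_l.
        apply Rlt_le, Rmult_lt_0_compat; [lra|apply Rinv_0_lt_compat; lra].
      * apply (div_helper _ (Csum k n) (INR (S (2 * n - k)))).
        -- unfold Rdiv. apply Rmult_le_pos; [apply Csum_nonneg, tdep_nonneg|].
           apply Rlt_le, Rinv_0_lt_compat; lra.
        -- field. lra.
        -- rewrite sqrt_sqrt by apply pos_INR. apply le_INR; lia.
        -- eapply Rle_trans; [apply Csum_bound|]. apply Rmult_le_compat_l; [lra|].
           apply sqrt_le_1_alt, le_INR; lia.
        -- exact Hs0.
  - apply is_lim_seq_const.
  - assert (H1 : is_lim_seq (fun n => / sqrt (INR n)) 0).
    { apply (is_lim_seq_inv _ p_infty). apply lim_sqrt. discriminate. }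
    apply is_lim_seq_incr_1 in H1.
    apply (is_lim_seq_scal_l _ (2^k)) in H1. simpl in H1. rewrite Rmult_0_r in H1.
    exact H1.
Qed.

Lemma main_bound k : exists e : nat -> R, is_lim_seq e 0 /\
  forall N y, 0 <= y <= 1 -> Rabs (Psum k N y - Q k y) <= e N.
Proof.
  induction k as [|k [e [He Hb]]].
  - exists (fun N => match N with O => 1 | S _ => 0 end). split.
    + apply is_lim_seq_incr_1. apply is_lim_seq_const.
    + intros [|N] y Hy.
      * cbn [Psum]. rewrite Q0. rewrite Rminus_0_l, Rabs_Ropp, Rabs_R1; lra.
      * rewrite Psum0, Q0. replace (1 - 1) with 0 by ring. rewrite Rabs_R0; lra.
  - exists (fun N => match N with O => (PI/2)^(S k) | S N' => e N' + Csum k N' / INR (S (2*N' - k)) end).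
    split.
    + apply is_lim_seq_incr_1. cbv beta iota.
      assert (H := is_lim_seq_plus' _ _ 0 0 He (lim_err k)).
      rewrite Rplus_0_r in H. exact H.
    + intros [|N] y Hy.
      * cbn [Psum]. unfold Q. rewrite Rminus_0_l, Rabs_Ropp. unfold Rdiv.
        assert (HF : 1 <= INR (fact (S k))).
        { pose proof (le_INR 1 (fact (S k)) (lt_O_fact (S k))) as H. change (INR 1) with 1 in H. lra. }
        rewrite !Rabs_mult, pow_1_abs, <- RPow_abs, (Rabs_pos_eq (/ _)).
        2:{ apply Rlt_le, Rinv_0_lt_compat; lra. }
        assert (HA : Rabs (atan y) ^ S k <= (PI/2)^(S k)).
        { apply pow_incr. split; [apply Rabs_pos|]. apply Rabs_le.
          pose proof (atan_bound y). lra. }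
        assert (HA0 : 0 <= Rabs (atan y) ^ S k) by (apply pow_le, Rabs_pos).
        assert (Hw : / INR (fact (S k)) * INR (fact (S k)) = 1) by (apply Rinv_l; lra).
        assert (Hw0 : 0 < / INR (fact (S k))) by (apply Rinv_0_lt_compat; lra).
        nra.
      * cbv beta iota.
        set (n := (2 * N - k)%nat).
        set (C := Csum k N).
        assert (HC : 0 <= C) by (apply Csum_nonneg, tdep_nonneg).
        assert (Hn : 0 < INR (S n)) by (apply lt_0_INR; lia).
        assert (He0 : 0 <= e N) by (eapply Rle_trans; [apply Rabs_pos| apply (Hb N 0); lra]).
        assert (Hbound := abs_bound
          (fun y => Psum (S k) (S N) y - Q (S k) y)
          (fun y => e N * y ^ 1 + C / INR (S n) * y ^ (S n))
          (fun y => Ader k (S N) y + Q k y / (1 + y^2))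
          (fun y => e N * (INR 1 * y ^ pred 1) + C / INR (S n) * (INR (S n) * y ^ pred (S n)))).
        eapply Rle_trans; [apply Hbound|].
        -- intros t. apply (dpl_eq _ _ (Ader k (S N) t - (- Q k t / (1 + t^2)))).
           { unfold Rdiv. ring. }
           apply derivable_pt_lim_minus; [apply D1|apply dQ].
        -- intros t. apply (derivable_pt_lim_plus (fun y => e N * y ^ 1) (fun y => C / INR (S n) * y ^ (S n))); apply dscal.
        -- intros t Ht. cbv beta.
           assert (Ht2 : 1 <= 1 + t^2) by (pose proof (pow2_ge_0 t); lra).
           assert (HA : Ader k (S N) t = (- Psum k N t + (-1)^N * Csum k N * t ^ (2*N - k)) / (1 + t^2)).
           { rewrite <- D2. field. lra. }
           rewrite HA. fold C. fold n.
           replace ((- Psum k N t + (-1) ^ N * C * t ^ n) / (1 + t ^ 2) + Q k t / (1 + t ^ 2))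
             with ((- (Psum k N t - Q k t) + (-1) ^ N * C * t ^ n) * / (1 + t ^ 2)) by (field; lra).
           rewrite Rabs_mult, (Rabs_pos_eq (/ _)) by (apply Rlt_le, Rinv_0_lt_compat; lra).
           replace (e N * (INR 1 * t ^ Nat.pred 1) + C / INR (S n) * (INR (S n) * t ^ Nat.pred (S n)))
             with (e N + C * t ^ n) by (simpl Nat.pred; change (INR 1) with 1; field; lra).
           assert (H1 : Rabs (- (Psum k N t - Q k t) + (-1) ^ N * C * t ^ n) <= e N + C * t ^ n).
           { eapply Rle_trans; [apply Rabs_triang|]. rewrite Rabs_Ropp, !Rabs_mult, pow_1_abs.
             rewrite (Rabs_pos_eq C) by lra. rewrite (Rabs_pos_eq (t ^ n)) by (apply pow_le; lra).
             specialize (Hb N t Ht). lra. }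
           assert (Hi : 0 < / (1 + t^2) <= 1).
           { split; [apply Rinv_0_lt_compat; lra|]. rewrite <- Rinv_1. apply Rinv_le_contravar; lra. }
           assert (0 <= Rabs (- (Psum k N t - Q k t) + (-1) ^ N * C * t ^ n)) by apply Rabs_pos.
           nra.
        -- cbv beta. rewrite Psum_at0, Q_at0. ring.
        -- cbv beta. simpl. ring.
        -- exact Hy.
        -- assert (Hp : y ^ S n <= 1) by (rewrite <- (pow1 (S n)); apply pow_incr; lra).
           assert (Hp0 : 0 <= y ^ S n) by (apply pow_le; lra).
           assert (Hb0 : 0 <= C / INR (S n)) by (unfold Rdiv; apply Rmult_le_pos; [lra|apply Rlt_le, Rinv_0_lt_compat; lra]).
           rewrite pow_1. nra.
Qed.

Theorem mainTheorem7 (r : nat) (hr : (0 < r)%nat) :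
  is_lim_seq (fun N : nat => 2 ^ r * Tbar_partial r N)
    ((-1) ^ r / INR (Factorial.fact r) * (PI / 2) ^ r).
Proof.
  destruct (main_bound r) as [e [He Hb]].
  assert (Heq : forall N, Tbar_partial r N = Psum r (S N) 1).
  { intros N. unfold Tbar_partial. induction N as [|N IH].
    - change (sum_f_R0 (fun m : nat => (-1) ^ m * tdep r m) 0) with ((-1)^0 * tdep r 0).
      change (Psum r 1 1) with (0 + (-1)^0 * tdep r 0 * 1 ^ (2 * 0 - r)). rewrite pow1. ring.
    - rewrite tech5, IH.
      change (Psum r (S (S N)) 1) with (Psum r (S N) 1 + (-1)^(S N) * tdep r (S N) * 1^(2 * S N - r)).
      rewrite pow1. ring. }
  assert (HL : is_lim_seq (fun N => Psum r (S N) 1) (Q r 1)).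
  { apply is_lim_seq_le_le with (u := fun N => Q r 1 - e (S N)) (w := fun N => Q r 1 + e (S N)).
    - intros N. assert (H := Hb (S N) 1 ltac:(lra)). apply Rabs_le_between' in H. lra.
    - apply is_lim_seq_incr_1 in He. assert (H := is_lim_seq_minus' _ _ (Q r 1) 0 (is_lim_seq_const _) He).
      rewrite Rminus_0_r in H. exact H.
    - apply is_lim_seq_incr_1 in He. assert (H := is_lim_seq_plus' _ _ (Q r 1) 0 (is_lim_seq_const _) He).
      rewrite Rplus_0_r in H. exact H. }
  apply (is_lim_seq_scal_l _ (2^r)) in HL. simpl in HL.
  replace ((-1) ^ r / INR (Factorial.fact r) * (PI / 2) ^ r) with (2^r * Q r 1).
  - eapply is_lim_seq_ext; [|exact HL]. intros N. cbv beta. rewrite Heq. reflexivity.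
  - unfold Q. rewrite atan_1. replace (PI/2) with (2 * (PI/4)) by field.
    rewrite Rpow_mult_distr. field. apply INR_fact_neq_0.
Qed.
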